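(* Let $V:\mathbb{R}^d\to\mathbb{R}$ be $\mathtt{m}$-convex ($\mathtt{m}\ge0$) and continuously differentiable, with $\|\nabla V(x)-\nabla V(y)\|\le M\|x-y\|$ for all $x,y$, where $M>0$. Assume there exists $x^*\in\arg\min_{\mathbb{R}^d}V$. Then for any $\bar\gamma<2/(M+\mathtt{m})$, $\gamma\in(0,\bar\gamma]$ and $x\in\mathbb{R}^d$, $$\|x-\gamma\nabla V(x)\|^2\le(1-\gamma\varpi)\|x\|^2+\gamma\{(2/(\mathtt{m}+M)-\bar\gamma)^{-1}+4\varpi\}\|x^*\|^2,$$ with $\varpi=\mathtt{m}M/(\mathtt{m}+M)$.
   Context: $V$ is $\mathtt{m}$-convex if $V(tx+(1-t)y)\le tV(x)+(1-t)V(y)-(\mathtt{m}/2)t(1-t)\|x-y\|^2$ for all $x,y\in\mathbb{R}^d$, $t\in[0,1]$; $\|\cdot\|$ Euclidean. *)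

(* Defs.v *)
From HB Require Import structures.
From mathcomp Require Import all_boot all_order all_algebra.
From mathcomp Require Import all_classical all_reals all_analysis.
Set Implicit Arguments. Unset Strict Implicit. Unset Printing Implicit Defensive.
Import Order.TTheory GRing.Theory Num.Theory.
Import numFieldNormedType.Exports.
Local Open Scope ring_scope.

(* Euclidean inner product and norm on R^d (the library norm on 'rV is the sup norm). *)
Definition dotv {R : realType} {d : nat} (u v : 'rV[R]_d) : R :=
  \sum_(i < d) u 0 i * v 0 i.
Definition enorm {R : realType} {d : nat} (u : 'rV[R]_d) : R :=
  Num.sqrt (dotv u u).

Definition mconvex {R : realType} {d : nat} (m : R) (V : 'rV[R]_d -> R) : Prop :=
  forall (x y : 'rV[R]_d) (t : R), 0 <= t <= 1 ->
    V (t *: x + (1 - t) *: y) <=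
      t * V x + (1 - t) * V y - (m / 2) * t * (1 - t) * enorm (x - y) ^+ 2.

Definition is_gradient {R : realType} {d : nat} (V : 'rV[R]_d -> R)
  (g : 'rV[R]_d -> 'rV[R]_d) : Prop :=
  forall x, differentiable V x /\ forall h, 'd V x h = dotv (g x) h.

(* Main.v *)
Require Import Defs.
From HB Require Import structures.
From mathcomp Require Import all_boot all_order all_algebra.
From mathcomp Require Import all_classical all_reals all_analysis.
From mathcomp Require Import ring lra.
Import Order.TTheory GRing.Theory Num.Theory.
Import numFieldNormedType.Exports.
Local Open Scope classical_set_scope.
Local Open Scope ring_scope.

Section Dot.
Context {R : realType} {d : nat}.
Implicit Types u v w : 'rV[R]_d.

Lemma dotvC u v : dotv u v = dotv v u.
Proof. by apply: eq_bigr => i _; rewrite mulrC. Qed.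

Lemma dotvDl u w v : dotv (u + w) v = dotv u v + dotv w v.
Proof. by rewrite /dotv -big_split; apply: eq_bigr => i _; rewrite mxE mulrDl. Qed.

Lemma dotvZl a u v : dotv (a *: u) v = a * dotv u v.
Proof. by rewrite /dotv mulr_sumr; apply: eq_bigr => i _; rewrite mxE mulrA. Qed.

Lemma dotvNl u v : dotv (- u) v = - dotv u v.
Proof. by rewrite -scaleN1r dotvZl mulN1r. Qed.

Lemma dotvBl u w v : dotv (u - w) v = dotv u v - dotv w v.
Proof. by rewrite dotvDl dotvNl. Qed.

Lemma dotvDr u w v : dotv v (u + w) = dotv v u + dotv v w.
Proof. by rewrite dotvC dotvDl !(dotvC v). Qed.

Lemma dotvZr a u v : dotv v (a *: u) = a * dotv v u.
Proof. by rewrite dotvC dotvZl dotvC. Qed.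

Lemma dotvBr u w v : dotv v (u - w) = dotv v u - dotv v w.
Proof. by rewrite dotvC dotvBl !(dotvC v). Qed.

Lemma dotv0l v : dotv 0 v = 0.
Proof. by rewrite -(scale0r (0 : 'rV[R]_d)) dotvZl mul0r. Qed.

Lemma dotv_ge0 u : 0 <= dotv u u.
Proof. by apply: sumr_ge0 => i _; rewrite -expr2 sqr_ge0. Qed.

Lemma enorm_sq u : enorm u ^+ 2 = dotv u u.
Proof. by rewrite /enorm sqr_sqrtr // dotv_ge0. Qed.

Lemma enorm_ge0 u : 0 <= enorm u.
Proof. exact: sqrtr_ge0. Qed.

Lemma dotv_eq0 u : dotv u u = 0 -> u = 0.
Proof.
move=> /eqP; rewrite psumr_eq0 => [/allP H|i _]; last by rewrite -expr2 sqr_ge0.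
apply/matrixP => i j; rewrite ord1 mxE.
have := H j (mem_index_enum j); rewrite /= -expr2 sqrf_eq0 => /eqP //.
Qed.

Lemma dotv_comb a b u v :
  dotv (a *: u + b *: v) (a *: u + b *: v) =
  a ^+ 2 * dotv u u + 2 * a * b * dotv u v + b ^+ 2 * dotv v v.
Proof.
rewrite !dotvDl !dotvDr !dotvZl !dotvZr (dotvC v u). ring.
Qed.

Lemma CS u v : dotv u v <= enorm u * enorm v.
Proof.
have [vv0|vvpos] := eqVneq (dotv v v) 0.
  rewrite (dotv_eq0 _ vv0) dotvC dotv0l; exact: mulr_ge0 (enorm_ge0 _) (enorm_ge0 _).
have vvp : 0 < dotv v v by rewrite lt_neqAle eq_sym vvpos dotv_ge0.
have H := dotv_ge0 (dotv v v *: u + (- dotv u v) *: v).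
rewrite dotv_comb in H.
have H2 : dotv u v ^+ 2 <= dotv u u * dotv v v.
  have : 0 <= dotv v v * (dotv u u * dotv v v - dotv u v ^+ 2).
    by move: H; congr (_ <= _); ring.
  by rewrite pmulr_rge0 // subr_ge0.
apply: (le_trans (ler_norm _)).
rewrite -sqrtr_sqr /enorm -sqrtrM ?dotv_ge0 //.
by rewrite ler_sqrt // mulr_ge0 // dotv_ge0.
Qed.

Lemma enormZ a u : enorm (a *: u) = `|a| * enorm u.
Proof.
by rewrite /enorm dotvZl dotvZr mulrA -expr2 sqrtrM ?sqr_ge0 // sqrtr_sqr.
Qed.

Lemma phi_derive (V : 'rV[R]_d -> R) g y v (t : R) : is_gradient V g ->
  is_derive t 1 (fun s : R => V (s *: v + y)) (dotv (g (t *: v + y)) v).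
Proof.
move=> HG; have [dV dVe] := HG (t *: v + y).
have E : (fun h : R => h^-1 *: (((fun s : R => V (s *: v + y)) \o shift t) (h *: 1) - V (t *: v + y)))
  = (fun h : R => h^-1 *: ((V \o shift (t *: v + y)) (h *: v) - V (t *: v + y))).
  apply/funext => h /=; congr (_ *: (V _ - _)).
  by rewrite /shift /= -[h%:A]/(h * 1) mulr1 scalerDl addrA.
split; first by rewrite /derivable E; exact: diff_derivable.
by rewrite /derive E -/(derive V _ v) deriveE.
Qed.


Lemma dPoly (a b t : R) : is_derive t (1:R) (fun s : R => a * s + b * s ^+ 2) (a + 2 * b * t).
Proof.
have -> : (fun s : R => a * s + b * s ^+ 2) = a \*: (@idfun R) + b \*: ((@idfun R) \* (@idfun R)).
  by apply/funext => s /=; rewrite expr2.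
apply: is_derive_eq.
by rewrite /= -[a%:A]/(a*1) -[t%:A]/(t*1) /GRing.scale /=; ring.
Qed.

Lemma upper (V : 'rV[R]_d -> R) g (M : R) : is_gradient V g ->
  (forall x y, enorm (g x - g y) <= M * enorm (x - y)) ->
  forall y z, V z <= V y + dotv (g y) (z - y) + M / 2 * enorm (z - y) ^+ 2.
Proof.
move=> HG HL y z; set v := z - y.
set c1 := dotv (g y) v; set n2 := dotv v v.
pose F := fun s : R => V (s *: v + y).
pose P := fun s : R => c1 * s + (M / 2 * n2) * s ^+ 2.
have dF : forall t : R, is_derive t (1:R) F (dotv (g (t *: v + y)) v) by move=> t; exact: phi_derive.
have dPsi : forall t : R, is_derive t (1:R) (F - P) (dotv (g (t *: v + y)) v - (c1 + 2 * (M / 2 * n2) * t)).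
  move=> t; exact: (is_deriveB (dF t) (dPoly _ _ t)).
have [c c01 E] := MVT (@ltr01 R) (fun t _ => dPsi t)
  (derivable_within_continuous (fun t _ => @ex_derive _ _ _ _ _ _ _ (dPsi t))).
move: E; rewrite /= /F /P /= !fctE scale1r scale0r add0r subr0 mulr1 expr0n /= mulr0 mulr0 addr0 expr1n mulr1.
have -> : v + y = z by rewrite /v subrK.
move=> E.
have c0 : 0 <= c by move: c01; rewrite in_itv /= => /andP [/ltW].
have Hb : dotv (g (c *: v + y)) v - c1 <= M * c * n2.
  rewrite /c1 -dotvBl; apply: (le_trans (CS _ _)).
  apply: (le_trans (ler_wpM2r (enorm_ge0 _) (HL _ _))).
  by rewrite addrK enormZ ger0_norm // /n2 -enorm_sq expr2 !mulrA.
move: E Hb; rewrite enorm_sq -/n2 mulr1 => E Hb.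
have : V z - (c1 + M / 2 * n2) - (V y - 0) <= 0 by rewrite E; lra.
lra.
Qed.

Lemma lower (V : 'rV[R]_d -> R) g (m : R) : mconvex m V -> is_gradient V g ->
  forall x z, V x + dotv (g x) (z - x) + m / 2 * enorm (z - x) ^+ 2 <= V z.
Proof.
move=> HC HG x z; set v := z - x.
have [dV dVe] := HG x.
pose q := fun h : R => h^-1 *: ((V \o shift x) (h *: v) - V x).
have Hq : q @ 0^' --> dotv (g x) v.
  rewrite -dVe -deriveE //. exact: (diff_derivable (v := v) dV).
have Hq' := cvg_dnbhs_at_right Hq.
pose G := fun h : R => (V z - V x - m / 2 * dotv v v) + (m / 2 * dotv v v) * h.
have HG' : G @ 0^'+ --> (V z - V x - m / 2 * dotv v v).
  apply: cvg_at_right_filter.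
  rewrite -[X in _ --> X]addr0 -[X in _ --> _ + X](mulr0 (m / 2 * dotv v v)).
  apply: cvgD; first exact: cvg_cst.
  apply: cvgM; [exact: cvg_cst | exact: cvg_id].
have := ler_cvg_to Hq' HG'.
have PF : ProperFilter (0:R)^'+ by exact: at_right_proper_filter.
move=> /(_ PF) H.
suff : dotv (g x) v <= V z - V x - m / 2 * dotv v v by rewrite enorm_sq; lra.
apply: H.
near=> h.
have h0 : 0 < h by near: h; exact: nbhs_right_gt.
have h1 : h <= 1 by near: h; apply: nbhs_right_le; exact: ltr01.
have := HC z x h; rewrite h1 ltW //= => /(_ isT).
have -> : h *: z + (1 - h) *: x = h *: v + x.
  by rewrite /v scalerBr scalerBl scale1r addrA addrAC.
rewrite /= /shift /=.
rewrite enorm_sq -/v => Hc.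
rewrite /G; change (h^-1 * (V (h *: v + x) - V x) <= V z - V x - m / 2 * dotv v v + m / 2 * dotv v v * h).
rewrite ler_pdivrMl //.
have -> : h * (V z - V x - m / 2 * dotv v v + m / 2 * dotv v v * h) =
  (h * V z + (1 - h) * V x - m / 2 * h * (1 - h) * dotv v v) - V x by ring.
by rewrite lerD2r.
Unshelve. all: by end_near.
Qed.

Lemma key_s (V : 'rV[R]_d -> R) g (m M : R) : mconvex m V -> is_gradient V g ->
  (forall x y, enorm (g x - g y) <= M * enorm (x - y)) ->
  forall x y (s : R),
  (2 * s - (M - m) * s ^+ 2) *
    (dotv (g y - g x) (g y - g x) - 2 * m * dotv (g y - g x) (y - x) + m ^+ 2 * dotv (y - x) (y - x))
  <= dotv (g y - g x) (y - x) - m * dotv (y - x) (y - x).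
Proof.
move=> HC HG HL x y s.
set Dl := y - x; set D := g y - g x.
have L1 := lower _ _ _ HC HG x (y - s *: (D - m *: Dl)).
have U1 := upper _ _ _ HG HL y (y - s *: (D - m *: Dl)).
have L2 := lower _ _ _ HC HG y (x + s *: (D - m *: Dl)).
have U2 := upper _ _ _ HG HL x (x + s *: (D - m *: Dl)).
have e1 : y - s *: (D - m *: Dl) - x = (1 + s * m) *: Dl + (- s) *: D.
  by apply/matrixP => i j; rewrite /Dl !mxE; ring.
have e2 : y - s *: (D - m *: Dl) - y = (s * m) *: Dl + (- s) *: D.
  by apply/matrixP => i j; rewrite /Dl !mxE; ring.
have e3 : x + s *: (D - m *: Dl) - y = (- (1 + s * m)) *: Dl + s *: D.
  by apply/matrixP => i j; rewrite /Dl !mxE; ring.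
have e4 : x + s *: (D - m *: Dl) - x = (- (s * m)) *: Dl + s *: D.
  by apply/matrixP => i j; rewrite /Dl !mxE; ring.
have egy : g y = g x + D by rewrite /D addrC subrK.
move: L1 U1 L2 U2.
set P1 := V (y - s *: (D - m *: Dl)).
set P2 := V (x + s *: (D - m *: Dl)).
move=> L1 U1 L2 U2.
clearbody P1 P2 Dl D.
rewrite e1 in L1; rewrite e2 in U1; rewrite e3 in L2; rewrite e4 in U2.
rewrite !enorm_sq !dotv_comb in L1 U1 L2 U2.
rewrite !dotvDr !dotvZr in L1 U1 L2 U2.
rewrite egy !dotvDl in U1 L2.
rewrite !(dotvC Dl D) in L1 U1 L2 U2.
nra.
Qed.

Lemma cocoercive (V : 'rV[R]_d -> R) g (m M : R) : m <= M -> mconvex m V -> is_gradient V g ->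
  (forall x y, enorm (g x - g y) <= M * enorm (x - y)) ->
  forall x y,
  dotv (g y - g x) (g y - g x) + m * M * dotv (y - x) (y - x) <=
  (M + m) * dotv (g y - g x) (y - x).
Proof.
move=> mM HC HG HL x y.
have K := key_s _ _ _ _ HC HG HL x y.
set W := dotv (g y - g x) (g y - g x) - 2 * m * dotv (g y - g x) (y - x) + m ^+ 2 * dotv (y - x) (y - x) in K.
set P := dotv (g y - g x) (y - x) - m * dotv (y - x) (y - x) in K.
suff : W <= (M - m) * P by rewrite /W /P; lra.
have [Lp|L0] := ltrP 0 (M - m).
  have := K (M - m)^-1.
  have -> : 2 * (M - m)^-1 - (M - m) * (M - m)^-1 ^+ 2 = (M - m)^-1.
    by field; rewrite gt_eqF.
  by rewrite ler_pdivrMl.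
have L0' : M - m = 0 by apply/eqP; rewrite eq_le L0 subr_ge0 mM.
rewrite L0' mul0r.
rewrite leNgt; apply/negP => Wp.
have := K ((P + 1) / (2 * W)).
rewrite L0' mul0r subr0.
have -> : 2 * ((P + 1) / (2 * W)) * W = P + 1 by field; rewrite gt_eqF.
lra.
Qed.

Lemma grad_min (V : 'rV[R]_d -> R) g (M : R) : 0 < M -> is_gradient V g ->
  (forall x y, enorm (g x - g y) <= M * enorm (x - y)) ->
  forall xs, (forall y, V xs <= V y) -> g xs = 0.
Proof.
move=> M0 HG HL xs Hmin.
have U := upper _ _ _ HG HL xs (xs - M^-1 *: g xs).
have := Hmin (xs - M^-1 *: g xs).
have e : xs - M^-1 *: g xs - xs = (- M^-1) *: g xs.
  by apply/matrixP => i j; rewrite !mxE; ring.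
rewrite e enorm_sq !dotvZr !dotvZl in U => H.
have H2 : M^-1 * dotv (g xs) (g xs) <= 0.
  have e2 : - M^-1 * dotv (g xs) (g xs) + M / 2 * (- M^-1 * (- M^-1 * dotv (g xs) (g xs)))
     = - (M^-1 * dotv (g xs) (g xs)) / 2.
    by field; rewrite gt_eqF.
  lra.
apply: dotv_eq0; apply/eqP; rewrite eq_le dotv_ge0 andbT.
have Mi : 0 < M^-1 by rewrite invr_gt0.
by rewrite -(pmulr_rle0 _ Mi).
Qed.

Lemma final_ineq (m M gm gb X S C G A B : R) : 0 <= m -> 0 < M -> 0 < gm -> gm <= gb ->
  gb < 2 / (M + m) -> 0 <= S ->
  G + m * M * (X - 2 * C + S) <= (M + m) * (A - B) ->
  0 <= (2 / (m + M) - gm) ^+ 2 * G + 2 * (2 / (m + M) - gm) * B + S ->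
  0 <= X - 4 * C + 4 * S ->
  X - 2 * gm * A + gm ^+ 2 * G <=
  (1 - gm * (m * M / (m + M))) * X + gm * ((2 / (m + M) - gb)^-1 + 4 * (m * M / (m + M))) * S.
Proof.
move=> m0 M0 g0 ggb gb2 S0 Hco Hq Hx.
have k0 : 0 < m + M by lra.
rewrite (addrC M m) in gb2 Hco.
set k := m + M in k0 gb2 Hco Hq *.
set w := m * M / k.
set a := 2 / k - gm.
set c0 := 2 / k - gb.
have c0p : 0 < c0 by rewrite /c0; lra.
have ac : c0 <= a by rewrite /a /c0; lra.
have ap : 0 < a by lra.
have w0 : 0 <= w by rewrite /w divr_ge0 // ?mulr_ge0 // ltW.
have h1 : G / k + w * (X - 2 * C + S) <= A - B.
  by rewrite /w mulrAC -mulrDl ler_pdivrMr // mulrC [_ * (m * M)]mulrC [_ * k]mulrC.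
have h2 : - 2 * B <= a * G + S / a.
  have e : a * (a * G + 2 * B + S / a) = a ^+ 2 * G + 2 * a * B + S.
    by rewrite mulrDr [a * (S / a)]mulrC divfK ?gt_eqF //; ring.
  have : 0 <= a * G + 2 * B + S / a by rewrite -(pmulr_rge0 _ ap) e.
  lra.
have h3 : S / a <= S / c0.
  by apply: ler_wpM2l => //; rewrite lef_pV2 ?posrE.
have ka : gm * (G / k) * 2 = gm * G * (2 / k) by rewrite mulrA [in RHS]mulrC !mulrA; ring.
have ea : 2 / k = a + gm by rewrite /a; ring.
have p1 := ler_wpM2l (ltW g0) h1.
have p2 := ler_wpM2l (ltW g0) h2.
have p3 := ler_wpM2l (ltW g0) h3.
have p4 := mulr_ge0 (mulr_ge0 (ltW g0) w0) Hx.
have p5 := mulr_ge0 (mulr_ge0 (ltW g0) w0) S0.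
rewrite ea in ka.
nra.
Qed.
End Dot.


Theorem lemma12 (R : realType) (d : nat) (V : 'rV[R]_d -> R)
  (gradV : 'rV[R]_d -> 'rV[R]_d) (m M : R) :
  0 <= m -> 0 < M ->
  mconvex m V ->
  is_gradient V gradV ->
  continuous gradV ->
  (forall x y, enorm (gradV x - gradV y) <= M * enorm (x - y)) ->
  forall xstar : 'rV[R]_d, (forall y, V xstar <= V y) ->
    forall (gbar gamma : R) (x : 'rV[R]_d),
      gbar < 2 / (M + m) -> 0 < gamma -> gamma <= gbar ->
      let varpi := m * M / (m + M) in
      enorm (x - gamma *: gradV x) ^+ 2 <=
        (1 - gamma * varpi) * enorm x ^+ 2
        + gamma * ((2 / (m + M) - gbar)^-1 + 4 * varpi) * enorm xstar ^+ 2.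
Proof.
move=> m0 M0 HC HG Hcont HL xs Hmin gb gm x gb2 g0 ggb; cbv zeta.
have [mM | Mm] := lerP m M; last first.
  have Z : forall u : 'rV[R]_d, u = 0.
    move=> u; have L := lower _ _ _ HC HG 0 u; have U := upper _ _ _ HG HL 0 u.
    rewrite subr0 enorm_sq in L U.
    apply: dotv_eq0; apply/eqP; rewrite eq_le dotv_ge0 andbT.
    have : (m - M) * dotv u u <= 0 by lra.
    by rewrite pmulr_rle0 // subr_gt0.
  have e0 : enorm (0 : 'rV[R]_d) = 0 by rewrite /enorm dotv0l sqrtr0.
  by rewrite (Z (x - _)) (Z x) (Z xs) e0 expr0n /= !mulr0 addr0.
have gs := grad_min _ _ _ M0 HG HL xs Hmin.
have Hco := cocoercive _ _ _ _ mM HC HG HL xs x.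
rewrite gs subr0 in Hco.
have e1 : x - xs = 1 *: x + (-1) *: xs by rewrite scale1r scaleN1r.
rewrite e1 dotv_comb dotvDr !dotvZr in Hco.
have e2 : x - gm *: gradV x = 1 *: x + (- gm) *: gradV x by rewrite scale1r scaleNr.
rewrite !enorm_sq e2 dotv_comb.
have Hq := dotv_ge0 ((2 / (m + M) - gm) *: gradV x + 1 *: xs).
rewrite dotv_comb in Hq.
have Hx := dotv_ge0 (1 *: x + (-2) *: xs).
rewrite dotv_comb in Hx.
set X := dotv x x in Hco Hx *; set S := dotv xs xs in Hco Hq Hx *.
set C := dotv x xs in Hco Hx *; set G := dotv (gradV x) (gradV x) in Hco Hq *.
set A := dotv (gradV x) x in Hco *; set B := dotv (gradV x) xs in Hco Hq *.
have Hco' : G + m * M * (X - 2 * C + S) <= (M + m) * (A - B) by lra.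
have Hq' : 0 <= (2 / (m + M) - gm) ^+ 2 * G + 2 * (2 / (m + M) - gm) * B + S by lra.
have Hx' : 0 <= X - 4 * C + 4 * S by lra.
have F := final_ineq _ _ _ _ _ _ _ _ _ _ m0 M0 g0 ggb gb2 (dotv_ge0 xs) Hco' Hq' Hx'.
rewrite -/S in F.
rewrite (dotvC x (gradV x)) -/A.
lra.
Qed.
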